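(* Let $m,n,k$ be positive integers with $k<n$, $A\in\mathbb{R}^{m\times n}$, $x^*\in\mathbb{R}^n$ with support $S^*$ satisfying $1\le|S^*|\le k$, $e\in\mathbb{R}^m$, $y=Ax^*+e$. Let $\mathcal{X}^0\in\mathbb{R}^n$, $\eta>0$, let $(S^t,x^t,\mathcal{X}^t)_{t\ge0}$ be generated by SEA, $b^t=u^t-\eta A^T(Ax^t-y)$ and $B=\sup_{t\in\mathbb{N}}\|b^t\|_\infty$. Assume $$B<\frac{1}{2\sum_{i\in S^*}\frac{1}{\eta|x^*_i|}},$$ and set $$T'_{max}=\frac{\sum_{i\in S^*}\frac{\max_{j\notin S^*}|\mathcal{X}^0_j|+|\mathcal{X}^0_i|}{\eta|x^*_i|}+k+1}{1-2B\sum_{i\in S^*}\frac{1}{\eta|x^*_i|}},\qquad \tau_i=\frac{\max_{j\notin S^*}|\mathcal{X}^0_j|+|\mathcal{X}^0_i|+2T'_{max}B}{\eta|x^*_i|}\ (i\in S^* ).$$ Then for every $i\in S^*$ and every integer $t\le T'_{max}$, $c^t_i\le\tau_i+1$.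
   Context: $S^*=\{i:x^*_i\neq0\}$. For $v\in\mathbb{R}^n$, $\mathrm{largest}_k(v)$ is the set of indices of the $k$ entries of $v$ with largest absolute value (ties broken by selecting the highest indices). For $S\subseteq\{1,\dots,n\}$, $A_S$ is the submatrix of columns indexed by $S$, $v_S$ the restriction of a vector to $S$, $A_S^\dagger$ the Moore–Penrose pseudoinverse of $A_S$. SEA with initialization $\mathcal{X}^0$ and step size $\eta$ generates, for $t=0,1,2,\dots$: $S^t=\mathrm{largest}_k(\mathcal{X}^t)$; $x^t_i=0$ for $i\notin S^t$ and $x^t_{S^t}=A_{S^t}^\dagger y$; $\mathcal{X}^{t+1}=\mathcal{X}^t-\eta A^T(Ax^t-y)$. The oracle direction is $u^t_i=-\eta x^*_i$ if $i\in S^*\setminus S^t$ and $u^t_i=0$ otherwise. The counts are $c^0_i=0$ and, for $t\ge1$, $c^t_i=|\{t'\in\{0,\dots,t-1\}: i\in S^*\setminus S^{t'}\}|$. *)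

(* Defs.v *)
From HB Require Import structures.
From mathcomp Require Import all_boot all_order all_algebra.
From mathcomp Require Import boolp classical_sets reals constructive_ereal ereal.
From Stdlib Require Import ClassicalEpsilon.
Set Implicit Arguments. Unset Strict Implicit. Unset Printing Implicit Defensive.
Import Order.TTheory GRing.Theory Num.Theory.
Local Open Scope ring_scope.

Section SEA.
Variable R : realType.

(* Moore--Penrose pseudoinverse: the (unique) matrix satisfying the four
   Penrose conditions (over the reals, transpose = conjugate transpose). *)
Definition penrose (p q : nat) (M : 'M[R]_(p, q)) (P : 'M[R]_(q, p)) : Prop :=
  [/\ M *m P *m M = M, P *m M *m P = P,
      (M *m P)^T = M *m P & (P *m M)^T = P *m M].

Definition pinv (p q : nat) (M : 'M[R]_(p, q)) : 'M[R]_(q, p) :=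
  epsilon (inhabits 0) (penrose M).

Definition better (n : nat) (v : 'cV[R]_n) (j i : 'I_n) : bool :=
  (`|v i 0| < `|v j 0|) || ((`|v j 0| == `|v i 0|) && (i < j)%N).

(* largest_k(v): indices of the k entries of largest absolute value
   (ties broken by selecting the highest indices). *)
Definition largest (n k : nat) (v : 'cV[R]_n) : {set 'I_n} :=
  [set i | (#|[set j | better v j i]| < k)%N].

Definition colsubset (m n : nat) (A : 'M[R]_(m, n)) (S : {set 'I_n})
  : 'M[R]_(m, #|S|) := colsub (fun j : 'I_#|S| => enum_val j) A.

(* x with x_i = 0 off S and x_S = A_S^dagger y. *)
Definition ls_on (m n : nat) (A : 'M[R]_(m, n)) (y : 'cV[R]_m) (S : {set 'I_n})
  : 'cV[R]_n :=
  let z := pinv (colsubset A S) *m y in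
  \col_i \sum_(j < #|S| | enum_val j == i) z j 0.

Variables (m n k : nat) (A : 'M[R]_(m, n)) (y : 'cV[R]_m) (eta : R)
          (X0 : 'cV[R]_n).

Fixpoint seaX (t : nat) : 'cV[R]_n :=
  match t with
  | 0 => X0
  | t'.+1 =>
      let X := seaX t' in
      X - eta *: (A^T *m (A *m ls_on A y (largest k X) - y))
  end.

Definition seaS (t : nat) : {set 'I_n} := largest k (seaX t).
Definition seax (t : nat) : 'cV[R]_n := ls_on A y (seaS t).

Variable xs : 'cV[R]_n.
Definition supp (v : 'cV[R]_n) : {set 'I_n} := [set i | v i 0 != 0].

Definition oracle_u (t : nat) : 'cV[R]_n :=
  \col_i (if i \in supp xs :\: seaS t then - eta * xs i 0 else 0).

Definition seab (t : nat) : 'cV[R]_n :=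
  oracle_u t - eta *: (A^T *m (A *m seax t - y)).

Definition count_c (t : nat) (i : 'I_n) : nat :=
  #|[set t' : 'I_t | i \in supp xs :\: seaS t']|.

End SEA.

Definition norminf (R : realType) (n : nat) (v : 'cV[R]_n) : R :=
  \big[Num.max/0]_(i < n) `|v i 0|.

(* Main.v *)
Require Import Defs.
From HB Require Import structures.
From mathcomp Require Import all_boot all_order all_algebra.
From mathcomp Require Import boolp classical_sets reals constructive_ereal ereal.
From mathcomp Require Import ring lra zify.
Import Order.TTheory GRing.Theory Num.Theory.
Local Open Scope ring_scope.

Lemma Xstep (R : realType) m n k (A : 'M[R]_(m, n)) y eta X0 xs t j :
  seaX k A y eta X0 t.+1 j 0 = seaX k A y eta X0 t j 0
    + seab k A y eta X0 xs t j 0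
    + (if j \in supp xs :\: seaS k A y eta X0 t then eta * xs j 0 else 0).
Proof.
rewrite /seab /oracle_u /seax /seaS /= !mxE.
by case: ifP => _; ring.
Qed.

Lemma count_sum (R : realType) m n k (A : 'M[R]_(m, n)) y eta X0 xs t i :
  count_c k A y eta X0 xs t i =
  (\sum_(t' < t) (i \in supp xs :\: seaS k A y eta X0 t'))%N.
Proof.
rewrite /count_c -sum1_card big_mkcond /=.
apply: eq_bigr => t' _. rewrite inE. by case: (_ \in _).
Qed.

Lemma count_S (R : realType) m n k (A : 'M[R]_(m, n)) y eta X0 xs t i :
  count_c k A y eta X0 xs t.+1 i =
  (count_c k A y eta X0 xs t i + (i \in supp xs :\: seaS k A y eta X0 t))%N.
Proof. by rewrite !count_sum big_ord_recr. Qed.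

Lemma count_0 (R : realType) m n k (A : 'M[R]_(m, n)) y eta X0 xs i :
  count_c k A y eta X0 xs 0 i = 0%N.
Proof. by rewrite count_sum big_ord0. Qed.

Lemma nonsupp_bound (R : realType) m n k (A : 'M[R]_(m, n)) y eta X0 xs B j :
  (forall t, `|seab k A y eta X0 xs t j 0| <= B) ->
  j \notin supp xs -> forall t,
  `|seaX k A y eta X0 t j 0| <= `|X0 j 0| + t%:R * B.
Proof.
move=> hB hj; elim=> [|t IH]; first by rewrite /= mul0r addr0.
rewrite (Xstep _ _ _ _ _ _ _ _ xs) finset.in_setD (negbTE hj) andbF addr0 -natr1.
have := ler_normD (seaX k A y eta X0 t j 0) (seab k A y eta X0 xs t j 0).
have := hB t. lra.
Qed.

Lemma supp_bound (R : realType) m n k (A : 'M[R]_(m, n)) y eta X0 xs B i :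
  (forall t, `|seab k A y eta X0 xs t i 0| <= B) -> forall t,
  eta * (xs i 0 * xs i 0) * (count_c k A y eta X0 xs t i)%:R
   - `|xs i 0| * (`|X0 i 0| + t%:R * B) <= xs i 0 * seaX k A y eta X0 t i 0.
Proof.
move=> hB; elim=> [|t IH].
  rewrite count_0 /= mulr0 mul0r addr0 sub0r -normrM.
  by apply: lerNnormlW.
rewrite (Xstep _ _ _ _ _ _ _ _ xs) count_S natrD -natr1.
have h1 : - (`|xs i 0| * B) <= xs i 0 * seab k A y eta X0 xs t i 0.
  apply: lerNnormlW; rewrite normrM.
  by apply: ler_wpM2l => //; apply: hB.
case: (i \in _) => /=; rewrite ?addr0; nra.
Qed.

Lemma fin_of_bounds (R : realType) (E : \bar R) (r c : R) :
  (r%:E <= E)%E -> (E < c%:E)%E -> E = (fine E)%:E.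
Proof. by case: E. Qed.

Lemma norminf_ge0 (R : realType) n (v : 'cV[R]_n) : 0 <= norminf v.
Proof. by rewrite /norminf; elim/big_ind: _ => // a b ha hb; rewrite le_max ha. Qed.

Lemma norminf_ub (R : realType) n (v : 'cV[R]_n) j : `|v j 0| <= norminf v.
Proof. by rewrite /norminf; apply: (le_bigmax (0:R) (fun i => `|v i 0|) j). Qed.

Theorem propositionC5 (R : realType) (m n k : nat)
  (A : 'M[R]_(m, n)) (xs : 'cV[R]_n) (e : 'cV[R]_m) (X0 : 'cV[R]_n) (eta : R) :
  (0 < m)%N -> (0 < k)%N -> (k < n)%N ->
  (1 <= #|supp xs|)%N -> (#|supp xs| <= k)%N ->
  0 < eta ->
  let y := A *m xs + e in
  let Bsup := ereal_sup [set (norminf (seab k A y eta X0 xs t))%:E | t in setT] in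
  let Ssum := \sum_(i in supp xs) (eta * `|xs i 0|)^-1 in
  (Bsup < (2 * Ssum)^-1 %:E)%E ->
  let B := fine Bsup in
  let M0 := \big[Num.max/0]_(j | j \notin supp xs) `|X0 j 0| in
  let Tmax :=
    (\sum_(i in supp xs) (M0 + `|X0 i 0|) / (eta * `|xs i 0|) + k%:R + 1)
      / (1 - 2 * B * Ssum) in
  let tau i := (M0 + `|X0 i 0| + 2 * Tmax * B) / (eta * `|xs i 0|) in
  forall (i : 'I_n), i \in supp xs ->
  forall t : nat, t%:R <= Tmax ->
    (count_c k A y eta X0 xs t i)%:R <= tau i + 1.
Proof.
move=> _ _ _ hs1 hsk heta y Bsup Ssum hlt B M0 Tmax tau i hi.
have hub : forall t, ((norminf (seab k A y eta X0 xs t))%:E <= Bsup)%E.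
  by move=> t; apply: ereal_sup_ubound; exists t.
have hE : Bsup = B%:E := @fin_of_bounds R _ _ _ (hub 0%N) hlt.
have hBt : forall t j, `|seab k A y eta X0 xs t j 0| <= B.
  move=> t j; apply: (le_trans (norminf_ub _ _ _ j)).
  by have := hub t; rewrite hE lee_fin.
have hB0 : 0 <= B.
  by apply: (le_trans (norminf_ge0 _ _ (seab k A y eta X0 xs 0))); have := hub 0%N; rewrite hE lee_fin.
have hM0 : 0 <= M0 by rewrite /M0; elim/big_ind: _ => // a b ha hb; rewrite le_max ha.
have hM0j : forall j, j \notin supp xs -> `|X0 j 0| <= M0.
  by move=> j hj; rewrite /M0; apply: (le_bigmax_cond (0:R) (fun j => `|X0 j 0|) hj).
have hxi : 0 < `|xs i 0| by rewrite normr_gt0; move: hi; rewrite inE.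
have hd : 0 < eta * `|xs i 0| by apply: mulr_gt0.
have hsq : xs i 0 * xs i 0 = `|xs i 0| * `|xs i 0|.
  by rewrite -normrM -expr2 ger0_norm // sqr_ge0.
elim=> [|t IH] ht.
  rewrite count_0 /tau; have : 0 <= (M0 + `|X0 i 0| + 2 * Tmax * B) / (eta * `|xs i 0|).
    apply: divr_ge0; last exact: ltW.
    have : 0 <= Tmax * B by apply: mulr_ge0.
    have := normr_ge0 (X0 i 0). lra.
  lra.
have htT : t%:R <= Tmax by move: ht; rewrite -natr1; lra.
rewrite count_S natrD.
case hP: (i \in supp xs :\: seaS k A y eta X0 t); last by rewrite addr0; exact: IH.
rewrite /= lerD2r.
rewrite leNgt; apply/negP => hlt2.
set c := (count_c k A y eta X0 xs t i)%:R in hlt2 *.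
set Xi := seaX k A y eta X0 t i 0.
have h1 := @supp_bound R m n k A y eta X0 xs B i (fun t => hBt t i) t.
rewrite -/c -/Xi hsq in h1.
have h2 : xs i 0 * Xi <= `|xs i 0| * `|Xi| by rewrite -normrM ler_norm.
have h3 : eta * `|xs i 0| * c - (`|X0 i 0| + t%:R * B) <= `|Xi|.
  rewrite -(ler_pM2l hxi); nra.
have h4 : M0 + `|X0 i 0| + 2 * Tmax * B < c * (eta * `|xs i 0|).
  by rewrite -ltr_pdivrMr.
have h5 : t%:R * B <= Tmax * B by apply: ler_wpM2r.
have hXi : M0 + t%:R * B < `|Xi| by nra.
move: hP; rewrite finset.in_setD => /andP[hk _].
move: hk; rewrite /seaS /largest inE => hk.
have hsub : [set j | better (seaX k A y eta X0 t) j i] \subset supp xs :\ i.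
  apply/fintype.subsetP => j; rewrite inE /better => hb.
  have hle : `|Xi| <= `|seaX k A y eta X0 t j 0|.
    by case/orP: hb => [/ltW|/andP[/eqP-> _]].
  rewrite finset.in_setD1; apply/andP; split.
    by apply/eqP => hji; move: hb; rewrite hji ltxx ltnn andbF.
  apply/negPn/negP => hj.
  have := @nonsupp_bound R m n k A y eta X0 xs B j (fun t => hBt t j) hj t.
  have := hM0j j hj. lra.
have := subset_leq_card hsub.
have := cardsD1 i (supp xs); rewrite hi /=.
move: hs1 hsk hk.
move: #|supp xs| #|supp xs :\ i| #|[set j | better (seaX k A y eta X0 t) j i]| => a1 b1 c1.
move=> g1 g2 g3 g5 g4; clear -g1 g2 g3 g5 g4; lia.
Qed.
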